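(* Consider the perfectly observed state-space system described in the context, and let $\hat\Pi_t=\mu_t(X_t)$ for $t=0,\dots,T$ (so $\hat\sigma_t(m_t)=\mu_t(x_t)$, where $x_t$ is the last state in $m_t$). Then $\hat\Pi_t$ is an approximate information state, and for all $t=0,\dots,T$, all memories $m_t=(x_{0:t},u_{0:t-1})$ and all $u_t\in\mathcal{U}_t$: (i) $\big|\sup_{c\in[[C_t|m_t,u_t]]}c-\sup_{c\in[[C_t|\mu_t(x_t),u_t]]}c\big|\le\epsilon_t:=2L_{d_t}\gamma_t$; (ii) $\mathcal{H}\big([[\hat\Pi_{t+1}|m_t,u_t]],[[\hat\Pi_{t+1}|\mu_t(x_t),u_t]]\big)\le\delta_t:=2\gamma_{t+1}+2L_{f_t}\gamma_t$, with $\gamma_{T+1}:=0$.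
   Context: Hausdorff distance: for nonempty subsets $\mathcal{A},\mathcal{B}$ of a metric space $(\mathcal{S},\eta)$, $\mathcal{H}(\mathcal{A},\mathcal{B}):=\max\{\sup_{a\in\mathcal{A}}\inf_{b\in\mathcal{B}}\eta(a,b),\sup_{b\in\mathcal{B}}\inf_{a\in\mathcal{A}}\eta(a,b)\}$. A function $f$ between metric spaces is $L$-invertible if there is $L\ge0$ with $\mathcal{H}(f^{-1}(y^1),f^{-1}(y^2))\le L\,\eta(y^1,y^2)$ for all $y^1,y^2$ in its image. System: horizon $T$; compact subsets $\mathcal{X}_t,\mathcal{W}_t$ of a metric space $(\mathcal{S},\eta)$ and action sets $\mathcal{U}_t$; state $X_{t+1}=f_t(X_t,U_t,W_t)$ with independent $X_0\in\mathcal{X}_0$, $W_t\in\mathcal{W}_t$; observation $Y_t=X_t$; cost $C_t=d_t(X_t,U_t)$. Memory $M_t=(X_{0:t},U_{0:t-1})$. $L_{d_t}$ is a Lipschitz constant of $d_t$ in the state (uniformly in $u$), $L_{f_t}$ a Lipschitz constant of $f_t$ in the state (uniformly in $u,w$). Quantization: finite $\hat{\mathcal{X}}_t\subset\mathcal{X}_t$ and $\gamma_t\ge0$ with $\mu_t(x):=\arg\min_{\hat x\in\hat{\mathcal{X}}_t}\eta(x,\hat x)$ satisfying $\max_{x\in\mathcal{X}_t}\eta(x,\mu_t(x))\le\gamma_t$; at $T+1$, $\mu_{T+1}$ is the identity. Ranges in this system: $[[C_t|m_t,u_t]]=\{d_t(x_t,u_t)\}$; $[[C_t|\hat x,u_t]]=\{d_t(x,u_t):x\in\mathcal{X}_t,\mu_t(x)=\hat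 x\}$; $[[\hat\Pi_{t+1}|m_t,u_t]]=\{\mu_{t+1}(f_t(x_t,u_t,w)):w\in\mathcal{W}_t\}$; $[[\hat\Pi_{t+1}|\hat x,u_t]]=\{\mu_{t+1}(f_t(x,u_t,w)):x\in\mathcal{X}_t,\ \mu_t(x)=\hat x,\ w\in\mathcal{W}_t\}$. Approximate information state: $\hat\Pi_t=\hat\sigma_t(M_t)$ with $\hat\sigma_t$ $L$-invertible into a bounded metric space, such that for each $t$ there are $\epsilon_t,\delta_t,\lambda_t\ge0$ with, for all $m_t,u_t$: (1) $|\sup[[C_t|m_t,u_t]]-\sup[[C_t|\hat\sigma_t(m_t),u_t]]|\le\epsilon_t$; (2) $\mathcal{H}([[\hat\Pi_{t+1}|m_t,u_t]],[[\hat\Pi_{t+1}|\hat\sigma_t(m_t),u_t]])\le\delta_t$; (3) $\mathcal{H}([[\hat\Pi_{t+1}|\hat\pi^1,u_t]],[[\hat\Pi_{t+1}|\hat\pi^2,u_t]])\le\lambda_t\eta(\hat\pi^1,\hat\pi^2)$ for all values $\hat\pi^1,\hat\pi^2$ of $\hat\Pi_t$. *)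

(* Defs.v *)
From HB Require Import structures.
From mathcomp Require Import all_boot all_order all_algebra.
From mathcomp Require Import boolp classical_sets functions cardinality reals constructive_ereal ereal.

Set Implicit Arguments.
Unset Strict Implicit.
Unset Printing Implicit Defensive.

Import Order.TTheory GRing.Theory Num.Theory.
Local Open Scope classical_set_scope.
Local Open Scope ring_scope.

Section Defs.
Variable R : realType.

Definition is_metric (S : Type) (eta : S -> S -> R) : Prop :=
  [/\ forall x y, 0 <= eta x y,
      forall x y, eta x y = 0 <-> x = y,
      forall x y, eta x y = eta y x &
      forall x y z, eta x z <= eta x y + eta y z].

Definition eta_compact (S : Type) (eta : S -> S -> R) (A : set S) : Prop :=
  forall u : nat -> S, (forall n, A (u n)) ->
  exists (phi : nat -> nat) (l : S),
    (forall n, (phi n < phi n.+1)%N) /\ A l /\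
    forall e : R, 0 < e -> exists N : nat, forall n, (N <= n)%N -> eta (u (phi n)) l < e.

Definition hausdorff (S : Type) (eta : S -> S -> R) (A B : set S) : \bar R :=
  Order.max
    (ereal_sup [set ereal_inf [set (eta a b)%:E | b in B] | a in A])
    (ereal_sup [set ereal_inf [set (eta a b)%:E | a in A] | b in B]).

Definition L_invertible (M Y : Type) (dM : M -> M -> R) (dY : Y -> Y -> R)
  (A : set M) (f : M -> Y) (L : R) : Prop :=
  0 <= L /\
  forall y1 y2, (f @` A) y1 -> (f @` A) y2 ->
    (hausdorff dM (A `&` f @^-1` [set y1]) (A `&` f @^-1` [set y2])
       <= (L * dY y1 y2)%:E)%E.

(** memories m_t = (x_{0:t}, u_{0:t-1}) *)
Record memory (S : Type) (U : nat -> Type) (t : nat) := Mem {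
  mem_x : 'I_t.+1 -> S;
  mem_u : forall s : 'I_t, U s }.

Definition last_state (S : Type) (U : nat -> Type) (t : nat) (m : memory S U t) : S :=
  mem_x m ord_max.

Definition memories (S : Type) (U : nat -> Type) (X : nat -> set S) (t : nat) :
  set (memory S U t) :=
  [set m | forall s : 'I_t.+1, X s (mem_x m s)].

Definition mem_dist (S : Type) (U : nat -> Type) (eta : S -> S -> R)
  (rho : forall s, U s -> U s -> R) (t : nat) (m1 m2 : memory S U t) : R :=
  Num.max (\big[Num.max/0]_(s < t.+1) eta (mem_x m1 s) (mem_x m2 s))
          (\big[Num.max/0]_(s < t) rho s (mem_u m1 s) (mem_u m2 s)).

Definition rangeC_mem (S : Type) (U : nat -> Type) (d : forall t, S -> U t -> R)
  (t : nat) (m : memory S U t) (u : U t) : set R :=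
  [set d t (last_state m) u].

Definition rangeC_hat (S : Type) (U : nat -> Type) (X : nat -> set S)
  (mu : nat -> S -> S) (d : forall t, S -> U t -> R)
  (t : nat) (xh : S) (u : U t) : set R :=
  [set d t x u | x in [set x | X t x /\ mu t x = xh]].

Definition rangePi_mem (S : Type) (U : nat -> Type) (W : nat -> set S)
  (mu : nat -> S -> S) (f : forall t, S -> U t -> S -> S)
  (t : nat) (m : memory S U t) (u : U t) : set S :=
  [set mu t.+1 (f t (last_state m) u w) | w in W t].

Definition rangePi_hat (S : Type) (U : nat -> Type) (X W : nat -> set S)
  (mu : nat -> S -> S) (f : forall t, S -> U t -> S -> S)
  (t : nat) (xh : S) (u : U t) : set S :=
  [set mu t.+1 (f t xw.1 u xw.2) | xw in
     [set xw : S * S | (X t xw.1 /\ mu t xw.1 = xh) /\ W t xw.2]].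

Definition esup (A : set R) : \bar R := ereal_sup [set (a%:E)%E | a in A].

End Defs.

(* Main.v *)
Require Import Defs.
From HB Require Import structures.
From mathcomp Require Import all_boot all_order all_algebra.
From mathcomp Require Import boolp classical_sets functions cardinality reals constructive_ereal ereal.
From mathcomp Require Import finmap lra.
Import Order.TTheory GRing.Theory Num.Theory.
Local Open Scope classical_set_scope.
Local Open Scope ring_scope.
Set Implicit Arguments.
Unset Strict Implicit.

Lemma haus_le (R : realType) (S : Type) (eta : S -> S -> R) (A B : set S) (c : R) :
  (forall a, A a -> exists2 b, B b & eta a b <= c) ->
  (forall b, B b -> exists2 a, A a & eta a b <= c) ->
  (hausdorff eta A B <= c%:E)%E.
Proof.
move=> HA HB; rewrite /hausdorff ge_max; apply/andP; split;
  apply: ge_ereal_sup => _ [a Aa <-].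
- have [b Bb h] := HA a Aa; apply: ge_ereal_inf; exists (eta a b)%:E; first by exists b.
  by rewrite lee_fin.
- have [b Bb h] := HB a Aa; apply: ge_ereal_inf; exists (eta b a)%:E; first by exists b.
  by rewrite lee_fin.
Qed.

Lemma fin_bound (R : realType) (S : Type) (A : set S) (g : S -> S -> R) :
  finite_set A -> exists B : R, 0 <= B /\ forall a b, A a -> A b -> g a b <= B.
Proof.
move=> fA.
have fin : finite_set [set g p.1 p.2 | p in A `*` A].
  by apply: finite_image; apply: finite_setX.
have [X eqX] := finite_fsetP.1 fin.
exists (Num.max 0 (\big[Num.max/0]_(x <- X) x)); split; first by rewrite le_max lexx.
move=> a b Aa Ab; rewrite le_max; apply/orP; right.
have : [set` X] (g a b) by rewrite -eqX; exists (a, b).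
move=> /= Xab.
exact: (le_bigmax_seq 0 (g a b) xpredT (fun x => x) Xab isT).
Qed.

Lemma mem_dist_le (R : realType) (S : Type) (U : nat -> Type) (eta : S -> S -> R)
  (rho : forall s, U s -> U s -> R) (t : nat) (m1 m2 : memory S U t) (c : R) :
  0 <= c -> (forall s : 'I_t.+1, eta (mem_x m1 s) (mem_x m2 s) <= c) ->
  (forall s : 'I_t, rho s (mem_u m1 s) (mem_u m2 s) <= c) -> mem_dist eta rho m1 m2 <= c.
Proof.
move=> c0 he hr; rewrite /mem_dist ge_max; apply/andP; split; apply: bigmax_le => //.
Qed.

Definition mem_set_last (S : Type) (U : nat -> Type) (t : nat) (m : memory S U t) (q : S) :=
  @Defs.Mem S U t (fun s : 'I_t.+1 => if s == ord_max then q else mem_x m s) (mem_u m).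

Arguments mem_set_last {S U t}.

Lemma mem_set_last_prop (R : realType) (S : Type) (U : nat -> Type) (eta : S -> S -> R)
  (rho : forall s, U s -> U s -> R) (X : nat -> set S) (t : nat) (m : memory S U t) (q : S) (c : R) :
  is_metric eta -> (forall s (u : U s), rho s u u = 0) ->
  @memories S U X t m -> X t q -> 0 <= c ->
  [/\ @memories S U X t (mem_set_last m q), last_state (mem_set_last m q) = q,
      (eta (last_state m) q <= c -> mem_dist eta rho m (mem_set_last m q) <= c) &
      (eta q (last_state m) <= c -> mem_dist eta rho (mem_set_last m q) m <= c)].
Proof.
move=> [h0 heq hs ht] hr Mm Xq c0; split.
- move=> s /=; case: ifPn => [/eqP ->|_] //; exact: Mm.
- by rewrite /last_state /= eqxx.
- move=> h; apply: mem_dist_le => // s /=; last by rewrite hr.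
  case: ifPn => [/eqP ->|_] //; by rewrite (proj2 (heq _ _)).
- move=> h; apply: mem_dist_le => // s /=; last by rewrite hr.
  case: ifPn => [/eqP ->|_] //; by rewrite (proj2 (heq _ _)).
Qed.

Unset Implicit Arguments.
Set Strict Implicit.

Theorem theorem5 (R : realType) (S : Type) (eta : S -> S -> R) (T : nat)
  (X W : nat -> set S) (U : nat -> Type)
  (f : forall t, S -> U t -> S -> S) (d : forall t, S -> U t -> R)
  (Ld Lf : nat -> R)
  (Xhat : nat -> set S) (gamma : nat -> R) (mu : nat -> S -> S)
  (rho : forall s, U s -> U s -> R) :
  (* metric space and compact state / noise sets *)
  is_metric eta ->
  (forall t, (t <= T)%N -> eta_compact eta (X t) /\ X t !=set0) ->
  (forall t, (t <= T)%N -> eta_compact eta (W t) /\ W t !=set0) ->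
  (* dynamics keep the state in the state sets *)
  (forall t, (t < T)%N -> forall x u w, X t x -> W t w -> X t.+1 (f t x u w)) ->
  (* Lipschitz constants *)
  (forall t, (t <= T)%N -> 0 <= Ld t /\
     forall u x y, X t x -> X t y -> `|d t x u - d t y u| <= Ld t * eta x y) ->
  (forall t, (t <= T)%N -> 0 <= Lf t /\
     forall u w x y, X t x -> X t y -> W t w ->
       eta (f t x u w) (f t y u w) <= Lf t * eta x y) ->
  (* quantization *)
  (forall t, (t <= T)%N ->
     [/\ finite_set (Xhat t), Xhat t `<=` X t, 0 <= gamma t,
         (forall x, X t x -> Xhat t (mu t x) /\
                             forall y, Xhat t y -> eta x (mu t x) <= eta x y) &
         (forall x, X t x -> eta x (mu t x) <= gamma t)]) ->
  mu T.+1 = (fun x => x) -> gamma T.+1 = 0 ->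
  (* metric on actions (used for the metric on memories) *)
  (forall s (u1 u2 : U s), 0 <= rho s u1 u2) -> (forall s (u : U s), rho s u u = 0) ->
  (* Pi_hat_t = mu_t(X_t) is an approximate information state ... *)
  ((forall t, (t <= T)%N ->
      (exists L : R, L_invertible (mem_dist eta rho (t:=t)) eta
                       (@memories S U X t) (fun m => mu t (last_state m)) L) /\
      (exists B : R, forall a b, Xhat t a -> Xhat t b -> eta a b <= B)) /\
   (exists lambda : nat -> R, forall t, (t <= T)%N -> 0 <= lambda t /\
      forall (u : U t) p1 p2, Xhat t p1 -> Xhat t p2 ->
        (hausdorff eta (rangePi_hat X W mu f p1 u) (rangePi_hat X W mu f p2 u)
           <= (lambda t * eta p1 p2)%:E)%E)) /\
  (* ... with the explicit constants epsilon_t and delta_t *)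
  (forall t, (t <= T)%N -> forall m : memory S U t, @memories S U X t m -> forall u : U t,
     (`| esup (rangeC_mem d m u) - esup (rangeC_hat X mu d (mu t (last_state m)) u) |
        <= (2 * Ld t * gamma t)%:E)%E /\
     (hausdorff eta (rangePi_mem W mu f m u)
                    (rangePi_hat X W mu f (mu t (last_state m)) u)
        <= (2 * gamma t.+1 + 2 * Lf t * gamma t)%:E)%E).
Proof.
move=> Hmet HX HW Hdyn HLd HLf Hq HmuT HgT Hrho0 Hrho.
have [Heta0 Heq Hsym Htri] := Hmet.
have eta_xx x : eta x x = 0 by apply/Heq.
have HXhX t : (t <= T)%N -> forall y, Xhat t y -> X t y.
  by move=> tT y; have [_ h _ _ _] := Hq t tT; exact: h.
have Hfix t : (t <= T)%N -> forall y, Xhat t y -> mu t y = y.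
  move=> tT y Xy; have [_ _ _ h _] := Hq t tT.
  have [_ /(_ y Xy)] := h y (HXhX t tT y Xy); rewrite eta_xx => h1.
  by apply/esym/Heq/le_anti; rewrite h1 Heta0.
have Hmu t : (t <= T)%N -> forall x, X t x -> Xhat t (mu t x).
  by move=> tT x Xx; have [_ _ _ h _] := Hq t tT; exact: (h x Xx).1.
have Hg t : (t <= T)%N -> forall x, X t x -> eta x (mu t x) <= gamma t.
  by move=> tT x Xx; have [_ _ _ _ h] := Hq t tT; exact: h.
have Hg0 t : (t <= T)%N -> 0 <= gamma t by move=> tT; have [] := Hq t tT.
have Hg0' t : (t <= T)%N -> 0 <= gamma t.+1.
  move=> tT; case: (ltnP t T) => [tT'|Tt]; first exact: Hg0.
  have -> : t = T by apply/eqP; rewrite eqn_leq tT Tt.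
  by rewrite HgT.
have Hnext t : (t <= T)%N -> forall x y u w, X t x -> X t y -> W t w ->
    eta (mu t.+1 (f t x u w)) (mu t.+1 (f t y u w)) <= 2 * gamma t.+1 + Lf t * eta x y.
  move=> tT x y u w Xx Xy Ww; have [_ hL] := HLf t tT; have := hL u w x y Xx Xy Ww.
  case: (ltnP t T) => [tT'|Tt]; last first.
    have eT : t = T by apply/eqP; rewrite eqn_leq tT Tt.
    subst T; by rewrite HmuT HgT mulr0 add0r.
  set a := f t x u w; set b := f t y u w => hab.
  have Xa : X t.+1 a by exact: Hdyn.
  have Xb : X t.+1 b by exact: Hdyn.
  have ha := Hg t.+1 tT' a Xa; have hb := Hg t.+1 tT' b Xb.
  have h1 := Htri (mu t.+1 a) a (mu t.+1 b).
  have h2 := Htri a b (mu t.+1 b).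
  rewrite (Hsym (mu t.+1 a) a) in h1; lra.
have HK t : exists K : R, (t <= T)%N -> (0 <= K) /\
    forall a b, Xhat t a -> Xhat t b -> a <> b -> 1 <= K * eta a b.
  case: (leqP t T) => tT; last by exists 0.
  have [fin _ _ _ _] := Hq t tT.
  have [B [B0 hB]] := fin_bound (fun a b => if pselect (a = b) then 0 else (eta a b)^-1) fin.
  exists B => _; split => // a b Xa Xb ab; have := hB a b Xa Xb.
  destruct (pselect (a = b)) as [e|ne0]; first by exfalso; exact: ab e.
  move=> /= hinv.
  have ep : 0 < eta a b.
    by rewrite lt_neqAle Heta0 andbT; apply/eqP => /esym /Heq.
  have ne : eta a b != 0 by rewrite gt_eqF.
  rewrite -[1](@mulVf _ (eta a b)) //; by rewrite ler_pM2r.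
have [K HK'] := choice HK.
split; [split|].
- move=> t tT; have [K0 HKt] := HK' t tT; split.
  + exists (1 + gamma t * K t); split.
      by apply: addr_ge0 => //; apply: mulr_ge0 => //; exact: Hg0.
    move=> y1 y2 [m1 Mm1 <-] [m2 Mm2 <-].
    set p1 := mu t (last_state m1); set p2 := mu t (last_state m2).
    have Xp1 : Xhat t p1 := Hmu t tT _ (Mm1 ord_max).
    have Xp2 : Xhat t p2 := Hmu t tT _ (Mm2 ord_max).
    have Fp1 : mu t p1 = p1 := Hfix t tT _ Xp1.
    have Fp2 : mu t p2 = p2 := Hfix t tT _ Xp2.
    have gt0 := Hg0 t tT.
    case: (pselect (p1 = p2)) => [e|ne].
      rewrite -e eta_xx mulr0; apply: haus_le => a Aa; exists a => //;
        by apply: mem_dist_le => // s; rewrite ?eta_xx ?Hrho.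
    have e0 := HKt p1 p2 Xp1 Xp2 ne.
    have e1 := ler_wpM2l gt0 e0; rewrite mulr1 in e1.
    have c0 : 0 <= (1 + gamma t * K t) * eta p1 p2.
      by apply: mulr_ge0 => //; apply: addr_ge0 => //; apply: mulr_ge0.
    have cb : gamma t + eta p1 p2 <= (1 + gamma t * K t) * eta p1 p2.
      by rewrite mulrDl mul1r -mulrA; lra.
    apply: haus_le.
    * move=> a [Ma Pa].
      have [Mb Lb H1 _] := mem_set_last_prop (rho:=rho) (q:=p2) Hmet Hrho Ma (HXhX t tT _ Xp2) c0.
      exists (mem_set_last a p2); first by split; [exact: Mb | change (mu t (last_state (mem_set_last a p2)) = p2); rewrite Lb Fp2].
      apply: H1.
      have := Htri (last_state a) p1 p2; have := Hg t tT _ (Ma ord_max).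
      rewrite /= in Pa; rewrite -/(last_state a) Pa; lra.
    * move=> b [Mb Pb].
      have [Ma La _ H2] := mem_set_last_prop (rho:=rho) (q:=p1) Hmet Hrho Mb (HXhX t tT _ Xp1) c0.
      exists (mem_set_last b p1); first by split; [exact: Ma | change (mu t (last_state (mem_set_last b p1)) = p1); rewrite La Fp1].
      apply: H2.
      have := Htri p1 p2 (last_state b); have := Hg t tT _ (Mb ord_max).
      rewrite /= in Pb; rewrite -/(last_state b) Pb (Hsym p2); lra.
  + have [fin _ _ _ _] := Hq t tT.
    have [B [_ hB]] := fin_bound (eta) fin.
    by exists B.
- exists (fun t => Lf t + (2 * gamma t.+1 + Lf t * gamma t) * K t) => t tT.
  have [K0 HKt] := HK' t tT.
  have [Lf0 _] := HLf t tT.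
  have gt0 := Hg0 t tT; have gt0' := Hg0' t tT.
  have c1 : 0 <= 2 * gamma t.+1 + Lf t * gamma t.
    by apply: addr_ge0; apply: mulr_ge0.
  split.
    by apply: addr_ge0 => //; apply: mulr_ge0.
  move=> u p1 p2 Xp1 Xp2.
  have Fp1 : mu t p1 = p1 := Hfix t tT _ Xp1.
  have Fp2 : mu t p2 = p2 := Hfix t tT _ Xp2.
  have XXp1 := HXhX t tT _ Xp1; have XXp2 := HXhX t tT _ Xp2.
  case: (pselect (p1 = p2)) => [<-|ne].
    rewrite eta_xx mulr0; apply: haus_le => _ [[x w] /= [[Xx mx] Ww] <-];
      (eexists; [exists (x, w) => // | by rewrite eta_xx]).
  have e0 := HKt p1 p2 Xp1 Xp2 ne.
  have e1 := ler_wpM2l c1 e0; rewrite mulr1 in e1.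
  have cb : 2 * gamma t.+1 + Lf t * (gamma t + eta p1 p2) <=
      (Lf t + (2 * gamma t.+1 + Lf t * gamma t) * K t) * eta p1 p2.
    by rewrite (mulrDl (Lf t)) -[X in _ <= _ + X]mulrA mulrDr; lra.
  apply: haus_le.
  + move=> _ [[x w] /= [[Xx mx] Ww] <-].
    exists (mu t.+1 (f t p2 u w)); first by exists (p2, w).
    have h1 := Hnext t tT x p2 u w Xx XXp2 Ww.
    have h2 := Htri x p1 p2; have h3 := Hg t tT x Xx; rewrite mx in h3.
    have h4 : eta x p2 <= gamma t + eta p1 p2 by lra.
    have h5 := ler_wpM2l Lf0 h4; lra.
  + move=> _ [[y w] /= [[Xy my] Ww] <-].
    exists (mu t.+1 (f t p1 u w)); first by exists (p1, w).
    have h1 := Hnext t tT p1 y u w XXp1 Xy Ww.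
    have h2 := Htri p1 p2 y; have h3 := Hg t tT y Xy; rewrite my (Hsym y) in h3.
    have h4 : eta p1 y <= gamma t + eta p1 p2 by lra.
    have h5 := ler_wpM2l Lf0 h4; lra.
- move=> t tT m Mm u.
  have Xx : X t (last_state m) := Mm ord_max.
  have [Ld0 HLd'] := HLd t tT.
  have [Lf0 _] := HLf t tT.
  have gt0 := Hg0 t tT; have gt0' := Hg0' t tT.
  split.
  + have e1 : esup (rangeC_mem d m u) = (d t (last_state m) u)%:E.
      rewrite /esup /rangeC_mem; apply/le_anti/andP; split.
        by apply: ge_ereal_sup => _ [a -> <-].
      by apply: ereal_sup_ubound; exists (d t (last_state m) u).
    have hlo : ((d t (last_state m) u)%:E <=
        esup (rangeC_hat X mu d (mu t (last_state m)) u))%E.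
      by apply: ereal_sup_ubound; exists (d t (last_state m) u) => //; exists (last_state m).
    have hup : (esup (rangeC_hat X mu d (mu t (last_state m)) u) <=
        (d t (last_state m) u + 2 * Ld t * gamma t)%:E)%E.
      apply: ge_ereal_sup => _ [_ [y [Xy my] <-] <-]; rewrite lee_fin.
      have h1 := ler_normlW (HLd' u y (last_state m) Xy Xx).
      have h2 := Htri y (mu t y) (last_state m).
      have h3 := Hg t tT y Xy; have h4 := Hg t tT _ Xx.
      rewrite my (Hsym (mu t (last_state m))) in h2.
      rewrite my in h3.
      have h5 : eta y (last_state m) <= 2 * gamma t by lra.
      have h6 := ler_wpM2l Ld0 h5; rewrite mulrA in h6; lra.
    rewrite e1; move: hlo hup.
    case: (esup _) => [r| |] //= hlo hup.
    rewrite lee_fin in hlo; rewrite lee_fin in hup.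
    rewrite lee_fin ler_norml; apply/andP; split; lra.
  + have c0 : 0 <= 2 * gamma t.+1 + 2 * Lf t * gamma t.
      by apply: addr_ge0; apply: mulr_ge0 => //; apply: mulr_ge0.
    apply: haus_le.
    * move=> _ [w Ww <-]; exists (mu t.+1 (f t (last_state m) u w)).
        by exists (last_state m, w).
      by rewrite eta_xx.
    * move=> _ [[y w] /= [[Xy my] Ww] <-].
      exists (mu t.+1 (f t (last_state m) u w)); first by exists w.
      have h1 := Hnext t tT (last_state m) y u w Xx Xy Ww.
      have h2 := Htri (last_state m) (mu t (last_state m)) y.
      have h3 := Hg t tT y Xy; have h4 := Hg t tT _ Xx.
      rewrite (Hsym (mu t (last_state m)) y) in h2.
      rewrite my in h3.
      have h5 : eta (last_state m) y <= 2 * gamma t by lra.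
      have h6 := ler_wpM2l Lf0 h5; rewrite mulrA in h6; lra.
Qed.
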